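(* For $n\ge 2$, let $X = (x_1,\dots,x_n)$ with $x_i\ge 0$ for $i=1,\dots,n$, and let $\alpha = (\alpha_1,\dots,\alpha_n)$ satisfy $\alpha_i > 0$ and $\sum_{i=1}^n \alpha_i = 1$. Then for all $r\in (0,1]$ and all $s\in [1,\infty)$, $$\frac{1}{1-\alpha_{\min}}\operatorname{Var}_\alpha(X^{r/2})^{1/r} \le E_\alpha X - \Pi_\alpha X \le \frac{1}{\alpha_{\min}} \operatorname{Var}_\alpha(X^{s/2})^{1/s}.$$
   Context: Notation: for a vector $Y=(y_1,\dots,y_n)$ and weights $\alpha=(\alpha_1,\dots,\alpha_n)$ with $\alpha_i>0$, $\sum_i\alpha_i=1$, the weighted arithmetic mean is $E_\alpha(Y) := \sum_{i=1}^n \alpha_i y_i$, the weighted geometric mean is $\Pi_\alpha(Y) := \prod_{i=1}^n y_i^{\alpha_i}$, and the weighted variance is $\operatorname{Var}_\alpha(Y) = \sum_{i=1}^n \alpha_i \left(y_i - \sum_{k=1}^n \alpha_k y_k\right)^2 = \sum_{i=1}^n \alpha_i y_i^2 - \left(\sum_{k=1}^n \alpha_k y_k\right)^2$. Powers of vectors are taken coordinatewise, e.g. $X^{r/2} = (x_1^{r/2},\dots,x_n^{r/2})$. $\alpha_{\min}$ denotes the minimum of $\alpha_1,\dots,\alpha_n$. *)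

(* Defs.v *)
From HB Require Import structures.
From mathcomp Require Import all_boot all_order all_algebra.
From mathcomp Require Import all_classical all_reals.
From mathcomp Require Import exp.
Set Implicit Arguments. Unset Strict Implicit. Unset Printing Implicit Defensive.
Import Order.TTheory GRing.Theory Num.Theory.
Local Open Scope ring_scope.

Section Means.
Variables (R : realType) (n : nat).

Definition wmean (alpha Y : 'I_n -> R) : R := \sum_(i < n) alpha i * Y i.

Definition wgeom (alpha Y : 'I_n -> R) : R := \prod_(i < n) (Y i `^ alpha i).

Definition wvar (alpha Y : 'I_n -> R) : R :=
  \sum_(i < n) alpha i * (Y i - wmean alpha Y) ^+ 2.

Definition vpow (Y : 'I_n -> R) (p : R) : 'I_n -> R := fun i => Y i `^ p.

(* alpha_min: minimum of alpha_1..alpha_n.  The neutral element 1 is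
   irrelevant when n >= 1 and all alpha_i <= 1 (as under sum alpha = 1). *)
Definition alpha_min (alpha : 'I_n -> R) : R := \big[Num.min/1]_(i < n) alpha i.

End Means.

(* Main.v *)
Require Import Defs.
From HB Require Import structures.
From mathcomp Require Import all_boot all_order all_algebra.
From mathcomp Require Import all_classical all_reals.
From mathcomp Require Import exp.
From mathcomp Require Import sequences.
From mathcomp Require Import ring lra.
Import Order.TTheory GRing.Theory Num.Theory.
Local Open Scope ring_scope.

Set Implicit Arguments. Unset Strict Implicit.
Section Aux.
Variable R : realType.

Lemma exp_tangent (m x : R) : expR m * (1 + (x - m)) <= expR x.
Proof.
have -> : expR x = expR m * expR (x - m) by rewrite -expRD addrC subrK.
by rewrite ler_pM2l ?expR_gt0 // expR_ge1Dx.
Qed.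

Lemma jensen3 (t g d x y z : R) : 0 <= t -> 0 <= g -> 0 <= d -> t + g + d = 1 ->
  expR (t * x + g * y + d * z) <= t * expR x + g * expR y + d * expR z.
Proof.
move=> t0 g0 d0 s1; set m := t * x + g * y + d * z.
have hx := exp_tangent m x; have hy := exp_tangent m y; have hz := exp_tangent m z.
have e0 := expR_gt0 m.
have : t * (expR m * (1 + (x - m))) + g * (expR m * (1 + (y - m))) + d * (expR m * (1 + (z - m)))
   <= t * expR x + g * expR y + d * expR z.
  by rewrite lerD ?ler_wpM2l // lerD ?ler_wpM2l.
suff -> : t * (expR m * (1 + (x - m))) + g * (expR m * (1 + (y - m))) + d * (expR m * (1 + (z - m))) = expR m by [].
have -> : t * (expR m * (1 + (x - m))) + g * (expR m * (1 + (y - m))) + d * (expR m * (1 + (z - m)))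
  = expR m * ((t + g + d) + (t * x + g * y + d * z) - (t + g + d) * m) by ring.
by rewrite s1 -/m; ring.
Qed.

Lemma jensen_fin (I : finType) (w y : I -> R) : (forall i, 0 <= w i) -> \sum_i w i = 1 ->
  expR (\sum_i w i * y i) <= \sum_i w i * expR (y i).
Proof.
move=> w0 s1; set m := \sum_i w i * y i.
have : \sum_i w i * (expR m * (1 + (y i - m))) <= \sum_i w i * expR (y i).
  by apply: ler_sum => i _; rewrite ler_wpM2l // exp_tangent.
suff -> : \sum_i w i * (expR m * (1 + (y i - m))) = expR m by [].
have -> : \sum_i w i * (expR m * (1 + (y i - m))) =
   \sum_i (expR m * w i + expR m * (w i * y i) - expR m * m * w i).
  by apply: eq_bigr => i _; ring.
rewrite sumrB big_split /= -!mulr_sumr s1 -/m; ring.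
Qed.

Lemma bern (r x : R) : 0 <= r -> r <= 1 -> 0 <= x -> x `^ r <= r * x + (1 - r).
Proof.
move=> r0 r1; rewrite le_eqVlt => /predU1P[<-|x0].
  case: (eqVneq r 0) => [->|rn0]; first by rewrite powRr0; lra.
  rewrite powR0 //; lra.
rewrite /powR gt_eqF //.
have h1 : 0 <= 1 - r by lra.
have h2 : r + (1 - r) + 0 = 1 by lra.
have := @jensen3 r (1 - r) 0 (ln x) 0 0 r0 h1 (lexx 0) h2.
rewrite !mulr0 !addr0 expR0 mul0r addr0 mulr1 lnK ?posrE // mulrC.
Qed.

Lemma cs_w (I : finType) (w v : I -> R) : (forall i, 0 <= w i) ->
  (\sum_i w i * v i) ^+ 2 <= (\sum_i w i) * (\sum_i w i * v i ^+ 2).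
Proof.
move=> w0.
have h : 0 <= \sum_i \sum_j w i * w j * (v i - v j) ^+ 2.
  by apply: sumr_ge0 => i _; apply: sumr_ge0 => j _; apply: mulr_ge0; [apply: mulr_ge0|apply: sqr_ge0].
have e : \sum_i \sum_j w i * w j * (v i - v j) ^+ 2 =
   2 * ((\sum_i w i) * (\sum_i w i * v i ^+ 2) - (\sum_i w i * v i) ^+ 2).
  have -> : \sum_i \sum_j w i * w j * (v i - v j) ^+ 2 =
      \sum_i ((w i * v i ^+ 2) * \sum_j w j + (\sum_j w j * v j ^+ 2) * w i
          - (2 * (w i * v i)) * \sum_j (w j * v j)).
    apply: eq_bigr => i _; rewrite !mulr_sumr mulr_suml -big_split -sumrB /=.
    by apply: eq_bigr => j _; ring.
  rewrite sumrB big_split /= -!mulr_suml -!mulr_sumr; ring.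
have : 0 <= 2 * ((\sum_i w i) * (\sum_i w i * v i ^+ 2) - (\sum_i w i * v i) ^+ 2) by rewrite -e.
rewrite pmulr_rge0 // subr_ge0 //.
Qed.

End Aux.

Section Aux.
Variable R : realType.

Lemma alg_step (a b s u H M Q g : R) : 0 < a -> a <= b -> a <= s -> b + s = 1 -> 0 < b ->
  0 < u -> 0 < H -> H <= M -> M ^+ 2 <= Q -> s * M ^+ 2 <= a * H ^+ 2 + (s - a) * Q ->
  (b * u + s * H) ^+ 2 <= a * g ^+ 2 + (1 - a) * (b * u ^+ 2 + s * H ^+ 2) ->
  (s * H <= (s - a) * u -> s * (1 - a) * H ^+ 2 <= (s - a) * g ^+ 2) ->
  (s * M + b * u) ^+ 2 <= a * g ^+ 2 + (1 - a) * (s * Q + b * u ^+ 2).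
Proof.
move=> a0 ab as_ bs b0 u0 H0 HM MQ IH F2 F3.
have s0 : 0 < s by lra.
case: (eqVneq (s - a) 0) => [D0|Dn0].
  have MH : M = H.
    have : M ^+ 2 <= H ^+ 2.
      rewrite D0 mul0r addr0 in IH.
      have e : a = s by lra.
      by rewrite -(ler_pM2l s0) -{2}e.
    rewrite -ler_sqrt ?sqr_ge0 // !sqrtr_sqr !gtr0_norm //; [lra|lra].
  subst M.
  have h : (1 - a) * (s * H ^+ 2) <= (1 - a) * (s * Q) by rewrite ler_wpM2l ?ler_wpM2l; lra.
  lra.
have D0 : 0 < s - a by rewrite lt_neqAle eq_sym Dn0 /=; lra.
set D := s - a in IH F3 D0 *.
have key : 0 <= b * (s * M - D * u) ^+ 2 + a * (D * g ^+ 2 - (1 - a) * s * H ^+ 2).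
  case: (lerP (s * H) (D * u)) => hc.
    have := F3 hc; have : 0 <= b * (s * M - D * u) ^+ 2 by rewrite mulr_ge0 ?sqr_ge0; lra.
    nra.
  have h1 : (s * H - D * u) ^+ 2 <= (s * M - D * u) ^+ 2.
    rewrite -ler_sqrt ?sqr_ge0 // !sqrtr_sqr !gtr0_norm; nra.
  have h2 : D * ((b * u + s * H) ^+ 2) <= D * (a * g ^+ 2 + (1 - a) * (b * u ^+ 2 + s * H ^+ 2)).
    by rewrite ler_wpM2l //; lra.
  have e : b * (s * H - D * u) ^+ 2 + a * (D * g ^+ 2 - (1 - a) * s * H ^+ 2) =
     D * (a * g ^+ 2 + (1 - a) * (b * u ^+ 2 + s * H ^+ 2)) - D * ((b * u + s * H) ^+ 2).
    rewrite /D; have -> : b = 1 - s by lra. ring.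
  have : b * (s * H - D * u) ^+ 2 <= b * (s * M - D * u) ^+ 2 by rewrite ler_wpM2l //; lra.
  lra.
have e2 : D * (a * g ^+ 2 + (1 - a) * (s * Q + b * u ^+ 2)) - D * ((s * M + b * u) ^+ 2)
   = b * (s * M - D * u) ^+ 2 + a * (D * g ^+ 2 - (1 - a) * s * H ^+ 2)
     + (1 - a) * s * (D * Q - (s * M ^+ 2 - a * H ^+ 2)).
  rewrite /D; have -> : b = 1 - s by lra. ring.
have h3 : 0 <= (1 - a) * s * (D * Q - (s * M ^+ 2 - a * H ^+ 2)).
  rewrite mulr_ge0 ?mulr_ge0 //; lra.
have : 0 <= D * (a * g ^+ 2 + (1 - a) * (s * Q + b * u ^+ 2)) - D * ((s * M + b * u) ^+ 2) by lra.
rewrite -mulrBr pmulr_rge0 // subr_ge0 //.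
Qed.


Lemma const_ln (a b s : R) : 0 < a -> a <= b -> a < s -> b + s = 1 -> 0 < b ->
  ln (1 - a) <= (1 - 2 * b) * ln ((s - a) / s).
Proof.
move=> a0 ab as_ bs b0.
have s0 : 0 < s by lra.
have rho0 : 0 < (s - a) / s by rewrite divr_gt0 //; lra.
have rho1 : (s - a) / s <= 1 by rewrite ler_pdivrMr //; lra.
have a1 : 0 < 1 - a by lra.
have lnr : ln ((s - a) / s) <= 0 by rewrite ln_le0.
have lna : ln (1 - a) <= 0 by rewrite ln_le0 //; lra.
case: (lerP (1 - 2 * b) 0) => hp.
  have : 0 <= (1 - 2 * b) * ln ((s - a) / s) by rewrite mulr_le0.
  lra.
set p := 1 - 2 * b in hp *; set rho := (s - a) / s in rho0 rho1 lnr *.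
have p1 : p <= 1 by rewrite /p; lra.
have hb := bern (ltW hp) p1 (_ : 0 <= rho^-1); rewrite invr_ge0 ltW // in hb.
move: hb; rewrite /powR invr_eq0 gt_eqF // lnV ?posrE // => hb.
rewrite -ler_expR lnK ?posrE //.
have E0 := expR_gt0 (p * - ln rho).
have -> : expR (p * ln rho) = (expR (p * - ln rho))^-1 by rewrite mulrN expRN invrK.
rewrite -[X in _ <= X]div1r ler_pdivlMr //.
apply: le_trans (_ : (1 - a) * (p * rho^-1 + (1 - p)) <= 1).
  by apply: ler_wpM2l; [exact: ltW|exact: hb].
have -> : rho^-1 = s / (s - a) by rewrite /rho invf_div.
have sa : 0 < s - a by lra.
have -> : (1 - a) * (p * (s / (s - a)) + (1 - p)) = (1 - a) * (p * s + (1 - p) * (s - a)) / (s - a).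
  by field; rewrite gt_eqF.
rewrite ler_pdivrMr // mul1r /p.
have -> : b = 1 - s by lra.
have a2 : a <= 1 - s by lra.
have h : 0 <= a * (1 - s) * (1 - 2 * a) by rewrite !mulr_ge0 //; lra.
have e : s - a - (1 - a) * ((1 - 2 * (1 - s)) * s + (1 - (1 - 2 * (1 - s))) * (s - a))
  = a * (1 - s) * (1 - 2 * a) by ring.
lra.
Qed.

Lemma F2 (a b s y L : R) : 0 < a -> a <= b -> a <= s -> b + s = 1 -> 0 < b ->
  (b * expR y + s * expR L) ^+ 2 <=
  a * expR (s * L + b * y) ^+ 2 + (1 - a) * (b * expR y ^+ 2 + s * expR L ^+ 2).
Proof.
move=> a0 ab as_ bs b0.
have s0 : 0 < s by lra.
pose t := a / (2 * b * s); pose g := (s - a) / (2 * s); pose d := (b - a) / (2 * b).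
have t0 : 0 <= t by rewrite /t divr_ge0 // ?mulr_ge0; lra.
have g0 : 0 <= g by rewrite /g divr_ge0 //; lra.
have d0 : 0 <= d by rewrite /d divr_ge0 //; lra.
have sum1 : t + g + d = 1.
  rewrite /t /g /d; have -> : s = 1 - b by lra.
  by field; apply/andP; split; rewrite gt_eqF //; lra.
have := jensen3 (2 * (s * L + b * y)) (2 * y) (2 * L) t0 g0 d0 sum1.
have -> : t * (2 * (s * L + b * y)) + g * (2 * y) + d * (2 * L) = y + L.
  rewrite /t /g /d; have -> : s = 1 - b by lra.
  by field; apply/andP; split; rewrite gt_eqF //; lra.
rewrite expRD => hj.
have hj2 : 2 * b * s * (expR y * expR L) <=
    a * expR (2 * (s * L + b * y)) + b * (s - a) * expR (2 * y) + s * (b - a) * expR (2 * L).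
  have e : a * expR (2 * (s * L + b * y)) + b * (s - a) * expR (2 * y) + s * (b - a) * expR (2 * L)
    = 2 * b * s * (t * expR (2 * (s * L + b * y)) + g * expR (2 * y) + d * expR (2 * L)).
    rewrite /t /g /d; field; apply/andP; split; rewrite gt_eqF //; lra.
  rewrite e ler_wpM2l //; rewrite !mulr_ge0 //; lra.
rewrite !expRM_natl in hj2.
set G := expR (s * L + b * y) in hj2 *; set u := expR y in hj2 *; set H := expR L in hj2 *.
have eb : b = 1 - s by lra.

have e : a * G ^+ 2 + (1 - a) * (b * u ^+ 2 + s * H ^+ 2) - (b * u + s * H) ^+ 2
  = (a * G ^+ 2 + b * (s - a) * u ^+ 2 + s * (b - a) * H ^+ 2) - 2 * b * s * (u * H).
  rewrite eb; ring.
lra.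
Qed.

Lemma F3 (a b s y L : R) : 0 < a -> a <= b -> a <= s -> b + s = 1 -> 0 < b ->
  s * expR L <= (s - a) * expR y ->
  s * (1 - a) * expR L ^+ 2 <= (s - a) * expR (s * L + b * y) ^+ 2.
Proof.
move=> a0 ab as_ bs b0 h.
have s0 : 0 < s by lra.
have eL := expR_gt0 L; have ey := expR_gt0 y.
have sa : a < s.
  rewrite lt_neqAle as_ andbT; apply/eqP => e; move: h; rewrite e subrr mul0r.
  have : 0 < s * expR L by rewrite mulr_gt0.
  lra.
have sa0 : 0 < s - a by lra.
have a1 : 0 < 1 - a by lra.
have h1 : ln s + L <= ln (s - a) + y.
  move: h; rewrite -ler_ln ?posrE ?mulr_gt0 // !lnM ?posrE // !expRK //.
have c := const_ln a0 ab sa bs b0.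
rewrite ln_div ?posrE // in c.
rewrite -ler_ln ?posrE ?mulr_gt0 ?exprn_gt0 ?expR_gt0 //.
have P1 : s * (1 - a) \in Num.pos by rewrite posrE mulr_gt0.
have P2 : expR L ^+ 2 \in Num.pos by rewrite posrE exprn_gt0.
have P3 : s - a \in Num.pos by rewrite posrE.
have P4 : expR (s * L + b * y) ^+ 2 \in Num.pos by rewrite posrE exprn_gt0 ?expR_gt0.
have P5 : s \in Num.pos by rewrite posrE.
have P6 : 1 - a \in Num.pos by rewrite posrE.
rewrite (lnM P1 P2) (lnM P3 P4) (lnM P5 P6) !lnXn ?expR_gt0 // !expRK !mulr2n.
have h2 : b * L <= b * (ln (s - a) - ln s + y) by rewrite ler_wpM2l //; lra.
have -> : s = 1 - b by lra.
move: c h2; have -> : s = 1 - b by lra.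
set X := ln (1 - b - a); set Y := ln (1 - b).
nra.
Qed.

Lemma core_up_exp (n : nat) : forall (al y : 'I_n.+1 -> R) (a : R),
  (forall i, 0 < al i) -> \sum_i al i = 1 -> 0 < a -> (forall i, a <= al i) ->
  (\sum_i al i * expR (y i)) ^+ 2 <=
  a * expR (\sum_i al i * y i) ^+ 2 + (1 - a) * \sum_i al i * expR (y i) ^+ 2.
Proof.
elim: n => [|n IH] al y a al0 s1 a0 aal.
  rewrite !big_ord1 in s1 *; rewrite s1 !mul1r.
  have -> : a * expR (y ord0) ^+ 2 + (1 - a) * expR (y ord0) ^+ 2 = expR (y ord0) ^+ 2 by ring.
  by [].
rewrite big_ord_recr /= in s1; rewrite !(big_ord_recr n.+1) /=.
set b := al ord_max in s1 *.
set w := fun i : 'I_n.+1 => al (widen_ord (leqnSn n.+1) i).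
set y' := fun i : 'I_n.+1 => y (widen_ord (leqnSn n.+1) i).
set s := \sum_(i < n.+1) al (widen_ord (leqnSn n.+1) i) in s1 *.
have w0 : forall i, 0 < w i by move=> i; exact: al0.
have b0 : 0 < b by exact: al0.
have as_ : a <= s.
  apply: le_trans (aal (widen_ord (leqnSn n.+1) ord0)) _.
  rewrite /s (bigD1 ord0) //= lerDl; apply: sumr_ge0 => i _; exact: ltW.
have s0 : 0 < s by apply: lt_le_trans a0 as_.
have ab : a <= b by exact: aal.
pose be i := w i / s.
have be0 : forall i, 0 < be i by move=> i; rewrite /be divr_gt0.
have bs1 : \sum_i be i = 1 by rewrite /be -mulr_suml divff // gt_eqF.
have IH' := IH be y' (a / s) be0 bs1 (divr_gt0 a0 s0).
have aal' : forall i, a / s <= be i by move=> i; rewrite /be ler_pM2r ?invr_gt0 //; exact: aal.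
move: (IH' aal') => {IH IH'} IH.
set M := \sum_i be i * expR (y' i) in IH.
set L := \sum_i be i * y' i in IH.
set Q := \sum_i be i * expR (y' i) ^+ 2 in IH.
have eM : \sum_(i < n.+1) al (widen_ord (leqnSn n.+1) i) * expR (y (widen_ord (leqnSn n.+1) i)) = s * M.
  rewrite /M mulr_sumr; apply: eq_bigr => i _; rewrite /be /w /y' /=; field; exact: lt0r_neq0 s0.
have eL : \sum_(i < n.+1) al (widen_ord (leqnSn n.+1) i) * y (widen_ord (leqnSn n.+1) i) = s * L.
  rewrite /L mulr_sumr; apply: eq_bigr => i _; rewrite /be /w /y' /=; field; exact: lt0r_neq0 s0.
have eQ : \sum_(i < n.+1) al (widen_ord (leqnSn n.+1) i) * expR (y (widen_ord (leqnSn n.+1) i)) ^+ 2 = s * Q.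
  rewrite /Q mulr_sumr; apply: eq_bigr => i _; rewrite /be /w /y' /=; field; exact: lt0r_neq0 s0.
rewrite eM eL eQ.
have HM : expR L <= M by apply: jensen_fin => // i; exact: ltW.
have MQ : M ^+ 2 <= Q.
  have := cs_w (fun i => expR (y' i)) (fun i => ltW (be0 i)); rewrite bs1 mul1r; exact.
have IH2 : s * M ^+ 2 <= a * expR L ^+ 2 + (s - a) * Q.
  have e : a * expR L ^+ 2 + (s - a) * Q = s * (a / s * expR L ^+ 2 + (1 - a / s) * Q)
    by field; exact: lt0r_neq0 s0.
  by rewrite e ler_pM2l.
have bs : b + s = 1 by lra.
apply: (alg_step a0 ab as_ bs b0 (expR_gt0 _) (expR_gt0 _) HM MQ IH2 _ _).
  exact: F2 a0 ab as_ bs b0.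
exact: F3 a0 ab as_ bs b0.
Qed.

End Aux.

Section Low.
Variable R : realType.
Variables (n : nat) (al : 'I_n -> R) (a : R).
Hypothesis s1 : \sum_i al i = 1.

Definition cc (i j : 'I_n) : R := al i * al j - (if i == j then a * al i else 0).

Lemma cc_sum (i : 'I_n) (f : 'I_n -> R) :
  \sum_j cc i j * f j = al i * \sum_j al j * f j - a * al i * f i.
Proof.
rewrite /cc.
have -> : \sum_j (al i * al j - (if i == j then a * al i else 0)) * f j =
   \sum_j (al i * (al j * f j) - (if i == j then a * al i else 0) * f j).
  by apply: eq_bigr => j _; ring.
rewrite sumrB -mulr_sumr; congr (_ - _).
rewrite (bigD1 i) //= eqxx big1 ?addr0 // => j ji.
by rewrite eq_sym (negbTE ji) mul0r.
Qed.

Lemma cc_tot : \sum_i \sum_j cc i j = 1 - a.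
Proof.
have -> : \sum_i \sum_j cc i j = \sum_i (al i * \sum_j al j * 1 - a * al i * 1).
  apply: eq_bigr => i _; have := cc_sum i (fun=> 1); rewrite /= => <-.
  by apply: eq_bigr => j _; rewrite mulr1.
have e1 : \sum_j al j * 1 = 1 by under eq_bigr do rewrite mulr1; exact: s1.
rewrite e1; under eq_bigr do rewrite !mulr1.
by rewrite sumrB -mulr_sumr s1 mulr1.
Qed.

Lemma cc_quad (u : 'I_n -> R) :
  \sum_i \sum_j cc i j * (u i * u j) = (\sum_i al i * u i) ^+ 2 - a * \sum_i al i * u i ^+ 2.
Proof.
have -> : \sum_i \sum_j cc i j * (u i * u j) = \sum_i u i * (al i * \sum_j al j * u j - a * al i * u i).
  apply: eq_bigr => i _; rewrite -cc_sum mulr_sumr; apply: eq_bigr => j _; ring.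
rewrite expr2 mulr_suml mulr_sumr -sumrB; apply: eq_bigr => i _; ring.
Qed.

Lemma cc_lin (y : 'I_n -> R) :
  \sum_i \sum_j cc i j * (y i + y j) = 2 * (1 - a) * \sum_i al i * y i.
Proof.
have -> : \sum_i \sum_j cc i j * (y i + y j) =
    \sum_i (y i * (al i * \sum_j al j * 1 - a * al i * 1) + (al i * \sum_j al j * y j - a * al i * y i)).
  apply: eq_bigr => i _.
  have -> : \sum_j cc i j * (y i + y j) = y i * \sum_j cc i j * 1 + \sum_j cc i j * y j.
    by rewrite mulr_sumr -big_split; apply: eq_bigr => j _ /=; ring.
  by rewrite (cc_sum i (fun=> 1)) cc_sum.
have e1 : \sum_j al j * 1 = 1 by under eq_bigr do rewrite mulr1; exact: s1.
rewrite e1; under eq_bigr do rewrite !mulr1.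
set T := \sum_j al j * y j.
have -> : \sum_i (y i * (al i - a * al i) + (al i * T - a * al i * y i)) =
  \sum_i ((1 - 2 * a) * (al i * y i) + T * al i) by apply: eq_bigr => i _; ring.
rewrite big_split /= -!mulr_sumr s1 -/T; ring.
Qed.

End Low.

Section D.
Variable R : realType.

Lemma prod_zero n (al u : 'I_n -> R) k : (forall i, 0 < al i) -> u k = 0 ->
  \prod_i u i `^ al i = 0.
Proof.
move=> al0 uk; rewrite (bigD1 k) //= uk powR0 ?mul0r //.
exact: lt0r_neq0.
Qed.

Lemma prod_exp n (al u : 'I_n -> R) : (forall i, 0 < u i) ->
  \prod_i u i `^ al i = expR (\sum_i al i * ln (u i)).
Proof.
move=> u0; rewrite expR_sum; apply: eq_bigr => i _.
by rewrite /powR gt_eqF // mulrC.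
Qed.

Lemma core_low n (al u : 'I_n -> R) (a : R) :
  (forall i, 0 < al i) -> \sum_i al i = 1 -> (forall i, 0 <= u i) -> 0 <= a -> a < 1 ->
  (forall i, a <= al i) ->
  (1 - a) * (\prod_i u i `^ al i) ^+ 2 <= (\sum_i al i * u i) ^+ 2 - a * \sum_i al i * u i ^+ 2.
Proof.
move=> al0 s1 u0 a0 a1 aal.
rewrite -(cc_quad al a u).
have c0 : forall i j, 0 <= cc al a i j.
  move=> i j; rewrite /cc; case: eqP => [<-|_].
    have -> : al i * al i - a * al i = al i * (al i - a) by ring.
    by apply: mulr_ge0; [exact: ltW | rewrite subr_ge0].
  by rewrite subr0; apply: mulr_ge0; exact: ltW.
case: (boolP [exists k, u k == 0]) => [/existsP [k /eqP uk] | /existsPn hn].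
  rewrite (prod_zero al0 uk) expr0n /= mulr0.
  by apply: sumr_ge0 => i _; apply: sumr_ge0 => j _; rewrite mulr_ge0 ?mulr_ge0.
have up : forall i, 0 < u i by move=> i; rewrite lt_neqAle eq_sym hn u0.
rewrite prod_exp //.
set y := fun i => ln (u i).
have uy : forall i, u i = expR (y i) by move=> i; rewrite /y lnK // posrE.
have a1' : 0 < 1 - a by lra.
pose w := fun p : 'I_n * 'I_n => cc al a p.1 p.2 / (1 - a).
pose Y := fun p : 'I_n * 'I_n => y p.1 + y p.2.
have w0 : forall p, 0 <= w p by move=> p; rewrite /w divr_ge0 // ltW.
have ws : \sum_p w p = 1.
  have -> : \sum_p w p = \sum_i \sum_j cc al a i j / (1 - a) by rewrite pair_bigA.
  have -> : \sum_i \sum_j cc al a i j / (1 - a) = (\sum_i \sum_j cc al a i j) / (1 - a).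
    by rewrite mulr_suml; apply: eq_bigr => i _; rewrite mulr_suml.
  by rewrite (cc_tot a s1) divff // gt_eqF.
have J := jensen_fin Y w0 ws.
have dsum : forall F : 'I_n -> 'I_n -> R,
    \sum_i \sum_j F i j / (1 - a) = (\sum_i \sum_j F i j) / (1 - a).
  by move=> F; rewrite mulr_suml; apply: eq_bigr => i _; rewrite mulr_suml.
have E1 : \sum_p w p * Y p = 2 * \sum_i al i * y i.
  have -> : \sum_p w p * Y p = \sum_i \sum_j cc al a i j * (y i + y j) / (1 - a).
    by rewrite pair_bigA; apply: eq_bigr => p _; rewrite /w /Y mulrAC.
  rewrite dsum (cc_lin a s1); field; exact: lt0r_neq0.
have E2 : \sum_p w p * expR (Y p) =
    (\sum_i \sum_j cc al a i j * (u i * u j)) / (1 - a).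
  rewrite -dsum pair_bigA; apply: eq_bigr => p _.
  by rewrite /w /Y expRD -!uy mulrAC.
rewrite E1 E2 expRM_natl ler_pdivlMr // in J.
by rewrite mulrC.
Qed.

Lemma core_up n (al u : 'I_n -> R) (a : R) :
  (forall i, 0 < al i) -> \sum_i al i = 1 -> (forall i, 0 <= u i) -> 0 < a ->
  (forall i, a <= al i) ->
  (\sum_i al i * u i) ^+ 2 <= a * (\prod_i u i `^ al i) ^+ 2 + (1 - a) * \sum_i al i * u i ^+ 2.
Proof.
case: n al u => [|m] al u al0 s1 u0 a0 aal.
  by move: s1; rewrite big_ord0 => /eqP; rewrite eq_sym oner_eq0.
case: (boolP [exists k, u k == 0]) => [/existsP [k /eqP uk] | /existsPn hn].
  rewrite (prod_zero al0 uk) expr0n /= mulr0 add0r.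
  pose w i := if i == k then 0 else al i.
  have w0 : forall i, 0 <= w i by move=> i; rewrite /w; case: eqP => // _; exact: ltW.
  have cs := cs_w u w0.
  have e1 : \sum_i w i * u i = \sum_i al i * u i.
    by apply: eq_bigr => i _; rewrite /w; case: eqP => [->|//]; rewrite uk !mulr0.
  have e2 : \sum_i w i * u i ^+ 2 = \sum_i al i * u i ^+ 2.
    by apply: eq_bigr => i _; rewrite /w; case: eqP => [->|//]; rewrite uk expr0n /= !mulr0.
  have e3 : \sum_i w i = 1 - al k.
    rewrite -s1 (bigD1 k) //= [X in _ = X - _](bigD1 k) //= /w eqxx add0r addrC addrK.
    by apply: eq_bigr => i /negbTE ->.
  rewrite e1 e2 e3 in cs; apply: le_trans cs _.
  rewrite ler_wpM2r ?lerD2l ?lerN2 //.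
  by apply: sumr_ge0 => i _; rewrite mulr_ge0 ?sqr_ge0 // ltW.
have up : forall i, 0 < u i by move=> i; rewrite lt_neqAle eq_sym hn u0.
rewrite prod_exp //.
have uy : forall i, u i = expR (ln (u i)) by move=> i; rewrite lnK // posrE.
have e1 : \sum_i al i * u i = \sum_i al i * expR (ln (u i)) by apply: eq_bigr => i _; rewrite -uy.
have e2 : \sum_i al i * u i ^+ 2 = \sum_i al i * expR (ln (u i)) ^+ 2 by apply: eq_bigr => i _; rewrite -uy.
rewrite e1 e2; exact: core_up_exp.
Qed.

End D.

Section E.
Variable R : realType.

Lemma pge (p r : R) : 0 <= p -> p <= 1 -> 0 < r -> r <= 1 -> p <= p `^ r.
Proof.
move=> p0 p1 r0 r1; case: (eqVneq p 0) => [->|pn0].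
  by rewrite powR0 ?gt_eqF.
by rewrite ger1_powR // lt_neqAle eq_sym pn0 p0.
Qed.

Lemma subadd (u v r : R) : 0 <= v -> v <= u -> 0 < r -> r <= 1 ->
  u `^ r <= v `^ r + (u - v) `^ r.
Proof.
move=> v0 vu r0 r1.
case: (eqVneq u 0) => [u0|un0].
  have v00 : v = 0 by lra.
  by rewrite u0 v00 subr0 powR0 ?gt_eqF // addr0.
have up : 0 < u by rewrite lt_neqAle eq_sym un0 /=; lra.
set p := v / u; set q := (u - v) / u.
have p0 : 0 <= p by rewrite divr_ge0 //; lra.
have q0 : 0 <= q by rewrite divr_ge0 //; lra.
have p1 : p <= 1 by rewrite ler_pdivrMr // mul1r.
have q1 : q <= 1 by rewrite ler_pdivrMr // mul1r; lra.
have pq : p + q = 1 by rewrite /p /q; field; exact: lt0r_neq0.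
have ev : v = u * p by rewrite /p; field; exact: lt0r_neq0.
have eq' : u - v = u * q by rewrite /q; field; exact: lt0r_neq0.
rewrite eq' ev (powRM _ (ltW up) p0) (powRM _ (ltW up) q0) -mulrDr.
have h := pge p0 p1 r0 r1; have h' := pge q0 q1 r0 r1.
have ur := powR_ge0 u r.
have : u `^ r * (p + q) <= u `^ r * (p `^ r + q `^ r) by rewrite ler_wpM2l //; lra.
by rewrite pq mulr1.
Qed.

Lemma sub_pow (u v r : R) : 0 <= u -> 0 <= v -> 0 < r -> r <= 1 ->
  (u `^ r - v `^ r) ^+ 2 <= ((u - v) ^+ 2) `^ r.
Proof.
move=> u0 v0 r0 r1.
wlog vu : u v u0 v0 / v <= u.
  move=> H; case: (lerP v u) => [|uv]; first exact: H.
  have -> : (u `^ r - v `^ r) ^+ 2 = (v `^ r - u `^ r) ^+ 2 by ring.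
  have -> : (u - v) ^+ 2 = (v - u) ^+ 2 by ring.
  by apply: H => //; exact: ltW.
have h := subadd v0 vu r0 r1.
have h0 : 0 <= u `^ r - v `^ r.
  by rewrite subr_ge0; apply: ge0_ler_powR; rewrite ?nnegrE // ltW.
have -> : ((u - v) ^+ 2) `^ r = ((u - v) `^ r) ^+ 2 by rewrite !expr2 powRM //; lra.
have h1 : u `^ r - v `^ r <= (u - v) `^ r by lra.
rewrite -ler_sqrt ?sqr_ge0 // !sqrtr_sqr !ger0_norm //; exact: powR_ge0.
Qed.

Lemma pow_jensen (I : finType) (w e : I -> R) (r : R) : 0 < r -> r <= 1 ->
  (forall i, 0 <= w i) -> \sum_i w i <= 1 -> (forall i, 0 <= e i) ->
  \sum_i w i * e i `^ r <= (\sum_i w i * e i) `^ r.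
Proof.
move=> r0 r1 w0 ws e0.
set E := \sum_i w i * e i.
have E0 : 0 <= E by apply: sumr_ge0 => i _; rewrite mulr_ge0.
case: (eqVneq E 0) => [Ez|En0].
  have h := psumr_eq0P (fun i _ => mulr_ge0 (w0 i) (e0 i)) Ez.
  rewrite big1 ?powR_ge0 // => i _.
  have := h i isT; move/eqP; rewrite mulf_eq0 => /orP[/eqP ->|/eqP ->]; first by rewrite mul0r.
  by rewrite powR0 ?mulr0 // gt_eqF.
have Ep : 0 < E by rewrite lt_neqAle eq_sym En0.
have Er := powR_ge0 E r.
have step : forall i, w i * e i `^ r <= E `^ r * (r * (w i * e i) / E + (1 - r) * w i).
  move=> i.
  have ei : e i = E * (e i / E) by field; exact: lt0r_neq0.
  rewrite [in X in X <= _]ei (powRM _ (ltW Ep) (divr_ge0 (e0 i) (ltW Ep))).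
  have b := @bern _ r (e i / E) (ltW r0) r1 (divr_ge0 (e0 i) (ltW Ep)).
  have : w i * (E `^ r * (e i / E) `^ r) <= w i * (E `^ r * (r * (e i / E) + (1 - r))).
    by rewrite ler_wpM2l // ler_wpM2l.
  suff -> : w i * (E `^ r * (r * (e i / E) + (1 - r))) = E `^ r * (r * (w i * e i) / E + (1 - r) * w i) by [].
  by field; exact: lt0r_neq0.
apply: le_trans (ler_sum _ (fun i _ => step i)) _.
rewrite -mulr_sumr big_split /= -mulr_suml -mulr_sumr -mulr_sumr -/E.
have -> : r * E / E = r by field; exact: lt0r_neq0.
rewrite -[X in _ <= X]mulr1 ler_wpM2l //.
have : (1 - r) * \sum_i w i <= (1 - r) * 1 by rewrite ler_wpM2l //; lra.
lra.
Qed.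

Lemma pow_jensen_rev (I : finType) (w e : I -> R) (s : R) : 1 <= s ->
  (forall i, 0 <= w i) -> \sum_i w i <= 1 -> (forall i, 0 <= e i) ->
  \sum_i w i * e i <= (\sum_i w i * e i `^ s) `^ (s^-1).
Proof.
move=> s1 w0 ws e0.
have s0 : 0 < s by lra.
have r0 : 0 < s^-1 by rewrite invr_gt0.
have r1 : s^-1 <= 1 by rewrite invf_le1.
have := pow_jensen r0 r1 w0 ws (fun i => powR_ge0 (e i) s).
suff -> : \sum_i w i * (e i `^ s) `^ s^-1 = \sum_i w i * e i by [].
apply: eq_bigr => i _; rewrite -powRrM mulfV ?gt_eqF // powRr1 //.
Qed.

Lemma sub_pow_rev (u v s : R) : 0 <= u -> 0 <= v -> 1 <= s ->
  ((u - v) ^+ 2) `^ s <= (u `^ s - v `^ s) ^+ 2.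
Proof.
move=> u0 v0 s1.
have s0 : 0 < s by lra.
have r0 : 0 < s^-1 by rewrite invr_gt0.
have r1 : s^-1 <= 1 by rewrite invf_le1.
have h := sub_pow (powR_ge0 u s) (powR_ge0 v s) r0 r1.
rewrite -!powRrM !mulfV ?gt_eqF // !powRr1 // in h.
have A1 : (u - v) ^+ 2 \in Num.nneg by rewrite nnegrE sqr_ge0.
have A2 : ((u `^ s - v `^ s) ^+ 2) `^ s^-1 \in Num.nneg by rewrite nnegrE powR_ge0.
have := @ge0_ler_powR _ s (ltW s0) _ _ A1 A2 h.
by rewrite -powRrM mulVf ?gt_eqF // powRr1 // sqr_ge0.
Qed.

End E.

Section F.
Variable R : realType.

Lemma var_expand n (al y : 'I_n -> R) : \sum_i al i = 1 ->
  wvar al y = \sum_i al i * y i ^+ 2 - (wmean al y) ^+ 2.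
Proof.
move=> s1; rewrite /wvar; set m := wmean al y.
have -> : \sum_i al i * (y i - m) ^+ 2 =
   \sum_i (al i * y i ^+ 2 - 2 * m * (al i * y i) + m ^+ 2 * al i).
  by apply: eq_bigr => i _; ring.
rewrite big_split sumrB /= -!mulr_sumr s1 -/(wmean al y) -/m; ring.
Qed.

Lemma var_pair n (al y : 'I_n -> R) : \sum_i al i = 1 ->
  wvar al y = \sum_(p : 'I_n * 'I_n) (al p.1 * al p.2 / 2) * (y p.1 - y p.2) ^+ 2.
Proof.
move=> s1; rewrite var_expand // /wmean.
rewrite -(pair_bigA _ (fun i j => al i * al j / 2 * (y i - y j) ^+ 2)) /=.
have -> : \sum_i \sum_j al i * al j / 2 * (y i - y j) ^+ 2 =
    \sum_i ((al i * y i ^+ 2) / 2 * \sum_j al j + (\sum_j al j * y j ^+ 2) * (al i / 2)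
          - (al i * y i) * \sum_j (al j * y j)).
  apply: eq_bigr => i _; rewrite !mulr_sumr mulr_suml -big_split -sumrB /=.
  by apply: eq_bigr => j _; field.
by rewrite sumrB big_split /= -!mulr_suml -!mulr_sumr s1 -mulr_suml s1; field.
Qed.

End F.

Lemma wsum_half (R : realType) n (al : 'I_n -> R) : \sum_i al i = 1 ->
  \sum_(p : 'I_n * 'I_n) (al p.1 * al p.2 / 2) = 2^-1.
Proof.
move=> s1.
rewrite -(pair_bigA _ (fun i j => al i * al j / 2)) /=.
have -> : \sum_i \sum_j al i * al j / 2 = \sum_i (al i / 2) * \sum_j al j.
  by apply: eq_bigr => i _; rewrite mulr_sumr; apply: eq_bigr => j _; rewrite mulrAC.
by rewrite s1 -mulr_suml -mulr_suml s1 mulr1 mul1r.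
Qed.

Unset Implicit Arguments.
Theorem theorem2p4 (R : realType) (n : nat) (x alpha : 'I_n -> R) (r s : R) :
  (2 <= n)%N ->
  (forall i, 0 <= x i) ->
  (forall i, 0 < alpha i) ->
  \sum_(i < n) alpha i = 1 ->
  0 < r -> r <= 1 -> 1 <= s ->
  (1 / (1 - alpha_min alpha)) * (wvar alpha (vpow x (r / 2)) `^ (1 / r))
    <= wmean alpha x - wgeom alpha x
  /\ wmean alpha x - wgeom alpha x
    <= (1 / alpha_min alpha) * (wvar alpha (vpow x (s / 2)) `^ (1 / s)).
Proof.
move=> n2 x0 al0 s1 r0 r1 s1'.
set a := alpha_min alpha.
have aal : forall i, a <= alpha i.
  by move=> i; rewrite /a /alpha_min (bigD1 i) //= ge_min lexx.
have a0 : 0 < a.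
  rewrite /a /alpha_min; apply: (big_ind (fun v => 0 < v)) => //.
  by move=> p q hp hq; rewrite lt_min hp hq.
have a1 : a < 1.
  pose i0 : 'I_n := Ordinal (ltn_trans (isT : (0 < 1)%N) n2).
  pose i1 : 'I_n := Ordinal n2.
  have h : alpha i0 + alpha i1 <= 1.
    rewrite -s1 (bigD1 i0) //= (bigD1 i1) //= addrA lerDl.
    by apply: sumr_ge0 => i _; exact: ltW.
  have := al0 i1; have := aal i0; lra.
set u := fun i => x i `^ (2^-1).
have u0 : forall i, 0 <= u i by move=> i; exact: powR_ge0.
have ux : forall i, u i ^+ 2 = x i.
  move=> i; rewrite /u -powR_mulrn ?powR_ge0 // -powRrM mulVf ?pnatr_eq0 // powRr1 //.
have xr : forall t i, vpow x (t / 2) i = u i `^ t.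
  by move=> t i; rewrite /vpow /u -powRrM mulrC.
have xa : forall i, x i `^ alpha i = (u i `^ alpha i) ^+ 2.
  by move=> i; rewrite -ux expr2 powRM.
have gx : wgeom alpha x = (\prod_i u i `^ alpha i) ^+ 2.
  by rewrite /wgeom -prodrXl; apply: eq_bigr => i _; rewrite xa.
have mx : wmean alpha x = \sum_i alpha i * u i ^+ 2.
  by rewrite /wmean; apply: eq_bigr => i _; rewrite ux.
have vu := var_expand u s1.
rewrite /wmean in vu.
have low := core_low al0 s1 u0 (ltW a0) a1 aal.
have up := core_up al0 s1 u0 a0 aal.
rewrite gx mx.
set G := \prod_i u i `^ alpha i in low up *.
set E2 := \sum_i alpha i * u i ^+ 2 in low up vu *.
set mu := \sum_i alpha i * u i in low up vu *.
set V1 := wvar alpha u in vu.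
have keyL : V1 <= (1 - a) * (E2 - G ^+ 2) by rewrite vu; lra.
have keyU : a * (E2 - G ^+ 2) <= V1 by rewrite vu; lra.
pose w := fun p : 'I_n * 'I_n => alpha p.1 * alpha p.2 / 2.
have w0 : forall p, 0 <= w p by move=> p; rewrite /w !mulr_ge0 ?invr_ge0 ?ler0n // ltW.
have ws : \sum_p w p <= 1 by rewrite /w wsum_half //; rewrite invf_le1 ?ler1n //.
have V1p : V1 = \sum_p w p * (u p.1 - u p.2) ^+ 2 by rewrite /V1 var_pair.
have V10 : 0 <= V1 by rewrite V1p; apply: sumr_ge0 => p _; rewrite mulr_ge0 ?sqr_ge0.
have nn : forall v : R, 0 <= v -> v \in Num.nneg by move=> v; rewrite nnegrE.
split.
  have Vr : wvar alpha (vpow x (r / 2)) = \sum_p w p * (u p.1 `^ r - u p.2 `^ r) ^+ 2.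
    by rewrite var_pair //; apply: eq_bigr => p _; rewrite !xr.
  have h1 : \sum_p w p * (u p.1 `^ r - u p.2 `^ r) ^+ 2 <= \sum_p w p * ((u p.1 - u p.2) ^+ 2) `^ r.
    by apply: ler_sum => p _; rewrite ler_wpM2l // sub_pow.
  have h2 := pow_jensen (e := fun p => (u p.1 - u p.2) ^+ 2) r0 r1 w0 ws (fun p => sqr_ge0 _).
  rewrite /= -V1p in h2.
  have Vr0 : 0 <= wvar alpha (vpow x (r / 2)).
    by rewrite Vr; apply: sumr_ge0 => p _; rewrite mulr_ge0 ?sqr_ge0.
  have h3 : wvar alpha (vpow x (r / 2)) <= V1 `^ r by rewrite Vr; apply: le_trans h1 h2.
  have h4 : wvar alpha (vpow x (r / 2)) `^ (1 / r) <= V1.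
    have := @ge0_ler_powR _ (1 / r) (ltW (divr_gt0 ltr01 r0)) _ _ (nn _ Vr0) (nn _ (powR_ge0 V1 r)) h3.
    by rewrite -powRrM div1r mulfV ?gt_eqF // powRr1.
  have a2 : 0 < 1 - a by rewrite subr_gt0.
  have h5 : 1 / (1 - a) * V1 <= E2 - G ^+ 2.
    by rewrite mulrC div1r ler_pdivrMr // mulrC.
  apply: le_trans h5; apply: ler_wpM2l h4; exact: divr_ge0 ler01 (ltW a2).
have Vs : wvar alpha (vpow x (s / 2)) = \sum_p w p * (u p.1 `^ s - u p.2 `^ s) ^+ 2.
  by rewrite var_pair //; apply: eq_bigr => p _; rewrite !xr.
have h3s := pow_jensen_rev (e := fun p => (u p.1 - u p.2) ^+ 2) s1' w0 ws (fun p => sqr_ge0 _).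
rewrite /= -V1p in h3s.
have h4s : \sum_p w p * ((u p.1 - u p.2) ^+ 2) `^ s <= wvar alpha (vpow x (s / 2)).
  by rewrite Vs; apply: ler_sum => p _; rewrite ler_wpM2l // sub_pow_rev.
have s0 : 0 < s by apply: lt_le_trans ltr01 s1'.
have h5s : V1 <= wvar alpha (vpow x (s / 2)) `^ (1 / s).
  apply: le_trans h3s _; rewrite div1r.
  apply: ge0_ler_powR => //; first by rewrite ltW // invr_gt0.
    by apply: nn; apply: sumr_ge0 => p _; rewrite mulr_ge0 ?powR_ge0.
  by apply: nn; apply: le_trans h4s; apply: sumr_ge0 => p _; rewrite mulr_ge0 ?powR_ge0.
have h6s : E2 - G ^+ 2 <= 1 / a * V1.
  by rewrite mulrC div1r ler_pdivlMr // mulrC.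
apply: le_trans h6s _; apply: ler_wpM2l h5s; exact: divr_ge0 ler01 (ltW a0).
Qed.
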